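(* Let $d\ge 1$, let $\Omega=\operatorname{diag}(\omega_j)_{j=1}^d\in\mathbb{R}^{d\times d}$ with all $\omega_j\ge 0$, and let $A\in\mathbb{C}^{d\times d}$ be self-adjoint. Let $0<h\le 1$ and let $\psi_1,\phi\colon\mathbb{R}\to\mathbb{R}$ be even functions satisfying \[ \psi_1(\xi)=\operatorname{sinc}(\xi)\,\phi(\xi)\qquad\text{for all }\xi\in\mathbb{R}. \] Set $\Psi_1=\psi_1(h\Omega)$, $\Phi=\phi(h\Omega)$. For given $q_0,\dot q_0\in\mathbb{C}^d$, define $(q_n,\dot q_n)_{n\ge 0}$ recursively by \begin{align*} q_{n+1} &= \cos(h\Omega) q_n + h\operatorname{sinc}(h\Omega) \dot{q}_n - \tfrac12 h^2 \operatorname{sinc}(h\Omega) \Psi_1 A\Phi q_n,\\ \dot{q}_{n+1} &= -\Omega \sin(h\Omega) q_n + \cos(h\Omega) \dot{q}_n - \tfrac12 h \big( \cos(h\Omega) \Psi_1 A\Phi q_n + \Psi_1 A\Phi q_{n+1}\big). \end{align*} Define \[ \mathcal{H}(q,\dot{q}) = \tfrac12 \|\Omega q\|^2 + \tfrac12 \|\dot{q}\|^2 + \tfrac12 \operatorname{Re}\big((\cos(h\Omega) \Phi q)^* A \Phi q\big) - \tfrac18 h^2 \|\Psi_1 A \Phi q\|^2 . \] Then $\mathcal{H}(q_{n+1},\dot q_{n+1})=\mathcal{H}(q_n,\dot q_n)$ for all $n\ge 0$.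
   Context: $\|\cdot\|$ is the Euclidean norm on $\mathbb{C}^d$ and ${}^*$ denotes conjugate transpose. $\operatorname{sinc}(\xi)=\sin(\xi)/\xi$ for $\xi\ne0$ and $\operatorname{sinc}(0)=1$. For a function $f\colon\mathbb{R}\to\mathbb{R}$, $f(h\Omega)$ denotes the diagonal matrix $\operatorname{diag}(f(h\omega_j))_{j=1}^d$; in particular $\cos(h\Omega),\sin(h\Omega),\operatorname{sinc}(h\Omega)$ are diagonal matrices. The recursion is a trigonometric integrator for $\ddot q=-\Omega^2q-Aq$. *)

(* Defs.v *)
From mathcomp Require Import all_boot all_algebra complex.
From mathcomp Require Import all_classical all_reals all_analysis.
Set Implicit Arguments. Unset Strict Implicit. Unset Printing Implicit Defensive.
Import GRing.Theory Num.Theory.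
Local Open Scope ring_scope.

Definition sinc (R : realType) (x : R) : R := if x == 0 then 1 else sin x / x.

Definition fdiag (R : realType) (d : nat) (f : R -> R) (h : R) (om : 'I_d -> R)
  : 'M[R[i]]_d := diag_mx (\row_j (f (h * om j))%:C%C).

Definition Omat (R : realType) (d : nat) (om : 'I_d -> R) : 'M[R[i]]_d :=
  diag_mx (\row_j (om j)%:C%C).

Definition adj (R : realType) (m n : nat) (M : 'M[R[i]]_(m, n)) : 'M[R[i]]_(n, m) :=
  map_mx conjc M^T.

Definition vnorm (R : realType) (d : nat) (v : 'cV[R[i]]_d) : R :=
  Num.sqrt (\sum_i (complex.Re (v i 0) ^+ 2 + complex.Im (v i 0) ^+ 2)).

Definition Henergy (R : realType) (d : nat) (om : 'I_d -> R) (A : 'M[R[i]]_d)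
  (h : R) (psi1 phi : R -> R) (q qd : 'cV[R[i]]_d) : R :=
  let Om := Omat om in
  let C := fdiag cos h om in
  let Psi1 := fdiag psi1 h om in
  let Phi := fdiag phi h om in
  2^-1 * vnorm (Om *m q) ^+ 2 + 2^-1 * vnorm qd ^+ 2
  + 2^-1 * complex.Re ((adj (C *m Phi *m q) *m A *m (Phi *m q)) 0 0)
  - 8^-1 * h ^+ 2 * vnorm (Psi1 *m A *m Phi *m q) ^+ 2.

(* Main.v *)
Require Import Defs.
From mathcomp Require Import all_boot all_algebra complex.
From mathcomp Require Import all_classical all_reals all_analysis.
From mathcomp Require Import ring lra.
Import GRing.Theory Num.Theory.
Set Implicit Arguments. Unset Strict Implicit.
Local Open Scope ring_scope.

Section H.
Variable R : realType.
Variable d : nat.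
Local Notation C := (R[i]).
Implicit Types (u v w : 'cV[C]_d) (M N : 'M[C]_d).

Definition dg (f : 'I_d -> R) : 'M[C]_d := diag_mx (\row_j (f j)%:C%C).

Lemma ReD (x y : C) : complex.Re (x + y) = complex.Re x + complex.Re y. Proof. by case: x => a b; case: y => c e /=. Qed.
Lemma ReN (x : C) : complex.Re (- x) = - complex.Re x. Proof. by case: x. Qed.
Lemma ReB (x y : C) : complex.Re (x - y) = complex.Re x - complex.Re y. Proof. by rewrite ReD ReN. Qed.
Lemma ReMr (r : R) (x : C) : complex.Re (r%:C%C * x) = r * complex.Re x.
Proof. by case: x => a b /=; rewrite mul0r subr0. Qed.
Lemma ReJ (x : C) : complex.Re (x^*)%C = complex.Re x. Proof. by case: x. Qed.
Lemma Re_sum (n : nat) (F : 'I_n -> C) : complex.Re (\sum_i F i) = \sum_i complex.Re (F i).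
Proof. by apply: (big_morph _ ReD). Qed.

Lemma adjE m n (M : 'M[C]_(m, n)) i j : adj M i j = ((M j i)^*)%C.
Proof. by rewrite /adj !mxE. Qed.

Lemma adj_mul m n p (M : 'M[C]_(m, n)) (N : 'M[C]_(n, p)) :
  adj (M *m N) = adj N *m adj M.
Proof. by rewrite /adj trmx_mul map_mxM. Qed.

Lemma adjK m n (M : 'M[C]_(m, n)) : adj (adj M) = M.
Proof. by apply/matrixP => i j; rewrite /adj !mxE conjcK. Qed.

Lemma adjD m n (M N : 'M[C]_(m, n)) : adj (M + N) = adj M + adj N.
Proof. by apply/matrixP => i j; rewrite /adj !mxE rmorphD. Qed.

Lemma adjN m n (M : 'M[C]_(m, n)) : adj (- M) = - adj M.
Proof. by apply/matrixP => i j; rewrite /adj !mxE rmorphN. Qed.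

Lemma adjZ m n a (M : 'M[C]_(m, n)) : adj (a *: M) = (a^*)%C *: adj M.
Proof. by apply/matrixP => i j; rewrite /adj !mxE rmorphM. Qed.

Lemma adj_dg f : adj (dg f) = dg f.
Proof.
apply/matrixP => i j; rewrite adjE /dg !mxE eq_sym.
case: eqP => [->|_]; rewrite ?mulr1n ?mulr0n; last by rewrite conjc0. exact: conjc_real.
Qed.

Lemma dgM f g : dg f *m dg g = dg (fun j => f j * g j).
Proof.
rewrite /dg mulmx_diag; congr diag_mx; apply/rowP => j; rewrite !mxE.
by rewrite -rmorphM.
Qed.

Lemma dg_ext f g : (forall j, f j = g j) -> dg f = dg g.
Proof. by move=> e; rewrite /dg; congr diag_mx; apply/rowP => j; rewrite !mxE e. Qed.

Lemma dgMv f g v : dg f *m (dg g *m v) = dg (fun j => f j * g j) *m v.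
Proof. by rewrite mulmxA dgM. Qed.

Lemma dgC f g v : dg f *m (dg g *m v) = dg g *m (dg f *m v).
Proof. by rewrite !dgMv; congr (_ *m _); apply: dg_ext => j; rewrite mulrC. Qed.

Lemma dg1 v : dg (fun _ => 1) *m v = v.
Proof.
rewrite /dg; apply/matrixP => i j; rewrite mul_diag_mx !mxE.
by rewrite mul1r.
Qed.

Lemma dgD f g v : dg f *m v + dg g *m v = dg (fun j => f j + g j) *m v.
Proof.
by apply/matrixP => i j; rewrite /dg !mul_diag_mx !mxE -mulrDl rmorphD.
Qed.

Lemma dgZ (r : R) f v : r%:C%C *: (dg f *m v) = dg (fun j => r * f j) *m v.
Proof.
by apply/matrixP => i j; rewrite /dg !mul_diag_mx !mxE rmorphM mulrA.
Qed.

Lemma dg_entry f v i : (dg f *m v) i 0 = (f i)%:C%C * v i 0.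
Proof. by rewrite /dg mul_diag_mx !mxE. Qed.

Definition ip u v : C := (adj u *m v) 0 0.

Lemma ipE u v : ip u v = \sum_i ((u i 0)^*)%C * v i 0.
Proof. by rewrite /ip !mxE; apply: eq_bigr => i _; rewrite adjE. Qed.

Lemma ipDl u v w : ip (u + v) w = ip u w + ip v w.
Proof. by rewrite /ip adjD mulmxDl mxE. Qed.
Lemma ipDr u v w : ip w (u + v) = ip w u + ip w v.
Proof. by rewrite /ip mulmxDr mxE. Qed.
Lemma ipNl u v : ip (- u) v = - ip u v.
Proof. by rewrite /ip adjN mulNmx mxE. Qed.
Lemma ipNr u v : ip u (- v) = - ip u v.
Proof. by rewrite /ip mulmxN mxE. Qed.
Lemma ipBl u v w : ip (u - v) w = ip u w - ip v w.
Proof. by rewrite ipDl ipNl. Qed.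
Lemma ipBr u v w : ip w (u - v) = ip w u - ip w v.
Proof. by rewrite ipDr ipNr. Qed.
Lemma ipZl a u v : ip (a *: u) v = (a^*)%C * ip u v.
Proof. by rewrite /ip adjZ -scalemxAl mxE. Qed.
Lemma ipZr a u v : ip u (a *: v) = a * ip u v.
Proof. by rewrite /ip -scalemxAr mxE. Qed.
Lemma ipMl M u v : ip (M *m u) v = ip u (adj M *m v).
Proof. by rewrite /ip adj_mul mulmxA. Qed.
Lemma ipJ u v : ((ip u v)^*)%C = ip v u.
Proof.
rewrite !ipE rmorph_sum; apply: eq_bigr => i _.
by rewrite rmorphM /= conjcK mulrC.
Qed.
Lemma Re_ipC u v : complex.Re (ip u v) = complex.Re (ip v u).
Proof. by rewrite -ipJ ReJ. Qed.

Lemma vnorm_sq v : vnorm v ^+ 2 = complex.Re (ip v v).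
Proof.
rewrite /vnorm sqr_sqrtr; last first.
  by apply: sumr_ge0 => i _; rewrite addr_ge0 // sqr_ge0.
rewrite ipE Re_sum; apply: eq_bigr => i _.
by case: (v i 0) => a b /=; rewrite !expr2; lra.
Qed.

End H.

Lemma conjcD (R : realType) (x y : R[i]) : ((x + y)^*)%C = (x^*)%C + (y^*)%C.
Proof. exact: rmorphD. Qed.
Lemma conjcN (R : realType) (x : R[i]) : ((- x)^*)%C = - (x^*)%C.
Proof. exact: rmorphN. Qed.
Lemma conjRM (R : realType) (r : R) (z : R[i]) : ((r%:C%C * z)^*)%C = r%:C%C * (z^*)%C.
Proof. by case: z => a b; apply/eqP; rewrite eq_complex /=; apply/andP; split; apply/eqP; ring. Qed.

Lemma entryD (R : realType) m n (u v : 'M[R[i]]_(m, n)) i j : (u + v) i j = u i j + v i j.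
Proof. by rewrite mxE. Qed.
Lemma entryN (R : realType) m n (u : 'M[R[i]]_(m, n)) i j : (- u) i j = - u i j.
Proof. by rewrite mxE. Qed.

Lemma xsinc (R : realType) (x : R) : x * sinc x = sin x.
Proof.
rewrite /sinc; case: eqP => [->|/eqP nz]; first by rewrite mul0r sin0.
by rewrite mulrC divfK.
Qed.

Lemma Re_kick (R : realType) d (a b : 'cV[R[i]]_d) (r : R) :
  complex.Re (ip (a + r%:C%C *: b) (a + r%:C%C *: b)) =
  complex.Re (ip a a) + 2 * r * complex.Re (ip a b) + r ^+ 2 * complex.Re (ip b b).
Proof.
rewrite !ipDl !ipDr !ipZl !ipZr conjc_real !ReD !ReMr (Re_ipC b a).
ring.
Qed.

Lemma rot (R : realType) d (cf sf : 'I_d -> R)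
  (e : forall j, cf j ^+ 2 + sf j ^+ 2 = 1) (a b : 'cV[R[i]]_d) :
  ip (dg cf *m a + dg sf *m b) (dg cf *m a + dg sf *m b)
  + ip (- (dg sf *m a) + dg cf *m b) (- (dg sf *m a) + dg cf *m b)
  = ip a a + ip b b.
Proof.
rewrite !ipE -!big_split; apply: eq_bigr => i _ /=.
rewrite !entryD !entryN !dg_entry !conjcD !conjcN !conjRM.
have ec : ((cf i)%:C%C ^+ 2 + (sf i)%:C%C ^+ 2 = 1 :> R[i]).
  by rewrite -!rmorphXn -rmorphD e rmorph1.
set c := (cf i)%:C%C in ec *; set s := (sf i)%:C%C in ec *.
transitivity ((c ^+ 2 + s ^+ 2) * (((a i 0)^*)%C * a i 0 + ((b i 0)^*)%C * b i 0)).
  ring.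
by rewrite ec mul1r.
Qed.

Lemma final (R : realType) (h Ny Nx Npp Npm Np Np1 Gx Gy Tx Ty W1 W2 Px Py : R) :
  Np = Npp + 2*(2^-1*h)*Px + (2^-1*h)^+2*Gx ->
  Np1 = Npm + 2*(-(2^-1*h))*Py + (-(2^-1*h))^+2*Gy ->
  Ny + Npm = Nx + Npp -> h*Px = W1 - Tx -> h*Py = Ty - W2 -> W1 = W2 ->
  2^-1*Ny + 2^-1*Np1 + 2^-1*Ty - 8^-1*h^+2*Gy = 2^-1*Nx + 2^-1*Np + 2^-1*Tx - 8^-1*h^+2*Gx.
Proof.
move=> -> -> e3 e5 e6 e.
have -> : 2 * (2^-1 * h) * Px = h * Px by field.
have -> : 2 * (-(2^-1 * h)) * Py = - (h * Py) by field.
rewrite e5 e6 e. lra.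
Qed.

Theorem theorem1 (R : realType) (d : nat) (hd : (0 < d)%N)
  (om : 'I_d -> R) (hom : forall j, 0 <= om j)
  (A : 'M[R[i]]_d) (hA : adj A = A)
  (h : R) (hh0 : 0 < h) (hh1 : h <= 1)
  (psi1 phi : R -> R)
  (hpsi_even : forall x, psi1 (- x) = psi1 x)
  (hphi_even : forall x, phi (- x) = phi x)
  (hpsi : forall x, psi1 x = sinc x * phi x)
  (q qd : nat -> 'cV[R[i]]_d)
  (hq : forall n, q n.+1 =
      fdiag cos h om *m q n + h%:C%C *: (fdiag (@sinc R) h om *m qd n)
      - (2^-1 * h ^+ 2)%:C%C *:
          (fdiag (@sinc R) h om *m fdiag psi1 h om *m A *m fdiag phi h om *m q n))
  (hqd : forall n, qd n.+1 =
      - (Omat om *m fdiag sin h om *m q n) + fdiag cos h om *m qd n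
      - (2^-1 * h)%:C%C *:
          (fdiag cos h om *m fdiag psi1 h om *m A *m fdiag phi h om *m q n
           + fdiag psi1 h om *m A *m fdiag phi h om *m q n.+1)) :
  forall n, Henergy om A h psi1 phi (q n.+1) (qd n.+1)
            = Henergy om A h psi1 phi (q n) (qd n).
Proof.
move=> n.
pose cf j := cos (h * om j). pose sf j := sin (h * om j).
pose sg j := sinc (h * om j). pose pf j := phi (h * om j).
pose qf j := psi1 (h * om j).
have eC : fdiag cos h om = dg cf by [].
have eS : fdiag sin h om = dg sf by [].
have eG : fdiag (@sinc R) h om = dg sg by [].
have eP : fdiag phi h om = dg pf by [].
have eQ : fdiag psi1 h om = dg qf by [].
have eO : Omat om = dg om by [].
have hqf : dg qf = dg sg *m dg pf.
  by rewrite dgM; apply: dg_ext => j; rewrite /qf hpsi.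
pose B := dg pf *m A *m dg pf.
have hB : adj B = B by rewrite /B !adj_mul hA adj_dg !mulmxA.
pose gv (v : 'cV[R[i]]_d) := dg sg *m (B *m v).
have hPsi : forall v : 'cV[R[i]]_d, dg qf *m A *m dg pf *m v = gv v.
  by move=> v; rewrite hqf /gv /B !mulmxA.
have hOS : forall v : 'cV[R[i]]_d, h%:C%C *: (dg om *m (dg sg *m v)) = dg sf *m v.
  move=> v; rewrite dgMv dgZ; congr (_ *m _); apply: dg_ext => j.
  by rewrite mulrA xsinc.
have hCS : forall v : 'cV[R[i]]_d, dg cf *m (dg cf *m v) + dg sf *m (dg sf *m v) = v.
  move=> v; rewrite !dgMv dgD -[RHS]dg1; congr (_ *m _); apply: dg_ext => j.
  by rewrite -!expr2 cos2Dsin2.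
set x := q n; set y := q n.+1; set p := qd n; set p1 := qd n.+1.
pose k := (2^-1 * h)%:C%C.
pose pp := p - k *: gv x.
have F1 : y = dg cf *m x + h%:C%C *: (dg sg *m pp).
  have E : h%:C%C *: (dg sg *m (k *: gv x)) =
       (2^-1 * h ^+ 2)%:C%C *: (dg sg *m dg qf *m A *m dg pf *m x).
    rewrite -scalemxAr scalerA -rmorphM; congr (_%:C%C *: _).
      by rewrite /k; ring.
    by rewrite -hPsi !mulmxA.
  by rewrite /y hq eC eG eQ eP /pp mulmxBr scalerBr E addrA.
pose pm := - (dg om *m (dg sf *m x)) + dg cf *m pp.
have F2 : p1 = pm - k *: gv y.
  rewrite /p1 hqd eC eS eO eQ eP hPsi /pm /pp mulmxBr -scalemxAr.
  have -> : dg cf *m dg qf *m A *m dg pf *m x = dg cf *m gv x.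
    by rewrite -hPsi !mulmxA.
  by rewrite mulmxA scalerDr opprD !addrA.
have F3 : h%:C%C *: (dg sg *m pp) = y - dg cf *m x.
  by rewrite F1 addrAC subrr add0r.
have F4 : h%:C%C *: (dg sg *m pm) = dg cf *m y - x.
  rewrite /pm mulmxDr mulmxN scalerDr scalerN (dgC sg om) hOS (dgC sg cf).
  rewrite scalemxAr F3 mulmxBr -{3}(hCS x).
  by rewrite addrC -addrA opprD.
have HE : forall v w : 'cV[R[i]]_d, Henergy om A h psi1 phi v w =
    2^-1 * complex.Re (ip (dg om *m v) (dg om *m v)) + 2^-1 * complex.Re (ip w w)
    + 2^-1 * complex.Re (ip v (dg cf *m (B *m v)))
    - 8^-1 * h ^+ 2 * complex.Re (ip (gv v) (gv v)).
  move=> v w; rewrite /Henergy !vnorm_sq eC eP eQ eO hPsi.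
  suff -> : (adj (dg cf *m dg pf *m v) *m A *m (dg pf *m v)) 0 0
          = ip v (dg cf *m (B *m v)) by [].
  rewrite -mulmxA -/(ip _ _).
  rewrite ipMl adj_mul !adj_dg /B !mulmxA dgM.
  rewrite -!mulmxA; congr (ip _ _); rewrite !mulmxA; congr (_ *m _ *m _).
  by rewrite dgM; congr (_ *m _); apply: dg_ext => j; rewrite mulrC.
have E1 : complex.Re (ip p p) = complex.Re (ip pp pp)
    + 2 * (2^-1 * h) * complex.Re (ip pp (gv x))
    + (2^-1 * h) ^+ 2 * complex.Re (ip (gv x) (gv x)).
  by rewrite -Re_kick /pp subrK.
have E2 : complex.Re (ip p1 p1) = complex.Re (ip pm pm)
    + 2 * (- (2^-1 * h)) * complex.Re (ip pm (gv y))
    + (- (2^-1 * h)) ^+ 2 * complex.Re (ip (gv y) (gv y)).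
  by rewrite -Re_kick F2 rmorphN scaleNr.
have E3 : complex.Re (ip (dg om *m y) (dg om *m y)) + complex.Re (ip pm pm)
    = complex.Re (ip (dg om *m x) (dg om *m x)) + complex.Re (ip pp pp).
  have -> : dg om *m y = dg cf *m (dg om *m x) + dg sf *m pp.
    by rewrite F1 mulmxDr (dgC om cf) -scalemxAr hOS.
  have -> : pm = - (dg sf *m (dg om *m x)) + dg cf *m pp.
    by rewrite /pm (dgC om sf).
  rewrite -!ReD rot //.
  by move=> j; rewrite /cf /sf cos2Dsin2.
have E5 : forall (u v w : 'cV[R[i]]_d), h%:C%C *: (dg sg *m u) = w ->
    h * complex.Re (ip u (gv v)) = complex.Re (ip w (B *m v)).
  move=> u v w <-; rewrite ipZl conjc_real ReMr ipMl adj_dg //.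
have W2 : forall v : 'cV[R[i]]_d, ip (dg cf *m v) (B *m v) = ip v (dg cf *m (B *m v)).
  by move=> v; rewrite ipMl adj_dg.
have E5x : h * complex.Re (ip pp (gv x)) =
    complex.Re (ip y (B *m x)) - complex.Re (ip x (dg cf *m (B *m x))).
  by rewrite (E5 _ x _ F3) ipBl ReB W2.
have E5y : h * complex.Re (ip pm (gv y)) =
    complex.Re (ip y (dg cf *m (B *m y))) - complex.Re (ip x (B *m y)).
  by rewrite (E5 _ y _ F4) ipBl ReB W2.
have W1 : complex.Re (ip y (B *m x)) = complex.Re (ip x (B *m y)).
  by rewrite Re_ipC ipMl hB.
rewrite !HE.
exact: (final E1 E2 E3 E5x E5y W1).
Qed.
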